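(* Let $M,N$ be finitely presented $n$-parameter persistence modules and $\kappa,\varepsilon\ge0$ with $d_0(M,N)<\kappa\varepsilon$ and $c_M>2\kappa\varepsilon$. Then for every $\vec b\in\xi_0(N)$ at least one of the following holds: (B.1) $\vec b$ lies within $\|\cdot\|_\infty$-distance $2\kappa\varepsilon$ of $\mathrm{Im}\,\mathcal G_M$; (B.2) $\vec b$ lies within distance $\kappa\varepsilon$ of $\mathrm{Grid}_{\mathcal G_M}$ and generates a bar of length less than $2\kappa\varepsilon$ in the module $N^{\mathcal L'}$, where $\mathcal L'=\mathcal L_{\mathsf U^{\mathcal G_M}_{\kappa\varepsilon}\mathsf M^{\mathcal G_M}_{\kappa\varepsilon}(\vec b)}$; (B.3) $\vec b$ generates a bar of length less than $2\kappa\varepsilon$ in the module $N^{\mathcal L_{\vec b}}$.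
   Context: Modules are $\mathbb{R}^n$-graded modules over the monoid ring $P_n$ of $([0,\infty)^n,+)$ over a field; finitely presented = cokernel of a map of finitely generated free modules. $\xi_i(N)$: grades (support of the $i$-th multiparameter Betti number $\dim\mathrm{Tor}_i(N,P_n/I)_{\vec a}$, $I$ generated by $\vec x^{\vec a}$, $\vec a\ne0$), identified with generators of $F_i$ in a fixed minimal free resolution of $N$. Multiparameter Betti grid $\mathcal G_M$: the product over coordinates of the sets of distinct coordinate values of points of $\bigcup_i\xi_i(M)$; $c_M=\min\{\|\vec x-\vec y\|_\infty:\vec x\ne\vec y\in\mathrm{Im}\,\mathcal G_M\}$; $\mathrm{Grid}_{\mathcal G}=\{\vec x:x_j\in\mathrm{Im}\,\mathcal G^j\text{ for some }j\}$. Merge $\mathsf M^{\mathcal G}_\delta$: coordinatewise, $x_i\mapsto\mathcal G^i(k)$ if $|x_i-\mathcal G^i(k)|\le\delta$, else unchanged. Unmerge on $\mathrm{Grid}_{\mathcal G}$: $\mathsf U^{\mathcal G}_\delta(\vec x)=\mathsf M^{\mathcal G}_\delta(\vec x)+\delta\sum_{i\in\mathcal I_{\vec x}}\vec e_i$, $\mathcal I_{\vec x}=\{i:\inf_k|x_i-\mathcal G^i(k)|\le\delta\}$. $\mathcal L_{\vec p}=\{\vec p+t\vec1\}$. Matching distance: for positively sloped $\mathcal L$ with order-preserving $\|\cdot\|_\infty$-isometric parametrization $\iota_{\mathcal L}$ ($\iota_{\mathcal L}(0)\in\{x_n=0\}$), $M^{\mathcal L}=M\circ\iota_{\mathcal L}$,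 $\mathrm{push}_{\mathcal L}(\vec p)=\min\{\vec q\in\mathcal L:\vec q\ge\vec p\}$, $w(\mathcal L)=\|\mathrm{push}_{\mathcal L}(\iota_{\mathcal L}(0)+\vec1)-\iota_{\mathcal L}(0)\|_\infty$, $d_0(M,N)=\sup_{\mathcal L}w(\mathcal L)d_B(M^{\mathcal L},N^{\mathcal L})$. Bars: the induced resolution of $N^{\mathcal L}$ has generators $\vec b^{\mathcal L}$ of grade $\iota_{\mathcal L}^{-1}\mathrm{push}_{\mathcal L}(\vec b)$; fix isomorphisms $N^{\mathcal L}\cong\bigoplus_j\mathds 1^{[b_j,d_j)}$ (possibly empty intervals, one per generator of $F_0$) lifted to chain maps to the canonical resolution (generators $b_j$, relations $d_j\mapsto x^{d_j-b_j}b_j$), chosen so that each bar is generated by a unique generator and killed by a unique relation and every generator generates a bar; $\vec b$ generates $[b_j,d_j)$ if $\vec b^{\mathcal L}$ has grade $b_j$ and maps with nonzero coefficient on $b_j$. Length of $[b_j,d_j)$ is $d_j-b_j$ (0 if empty). *)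

(* Defs.v *)
From HB Require Import structures.
From mathcomp Require Import all_boot all_order all_algebra.
From mathcomp Require Import boolp classical_sets reals.
Set Implicit Arguments. Unset Strict Implicit. Unset Printing Implicit Defensive.
Import Order.TTheory GRing.Theory Num.Theory.
Local Open Scope ring_scope.

(* Grades live in R^(n.+1) (n.+1 >= 1 parameters; the last coordinate is ord_max). *)
Section PM.
Variables (R : realType) (k : fieldType) (n : nat).

Definition vec := 'I_n.+1 -> R.

Definition leV (x y : vec) : bool := [forall i, x i <= y i].

Definition normInf (x : vec) : R := \big[Num.max/0]_(i < n.+1) `|x i|.
Definition distInf (x y : vec) : R := normInf (fun i => x i - y i).

(* finitely generated graded free P_n-module: rank + grades of its basis *)
Record gfree := GFree { grk : nat; ggr : 'I_grk -> vec }.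
Arguments ggr : clear implicits.

(* A graded map F -> G is a k-matrix A (row i = image of generator i of F):
   generator i of F maps to sum_j A i j x^(ggr F i - ggr G j) g_j. *)
Definition graded (F G : gfree) (A : 'M[k]_(grk F, grk G)) : Prop :=
  forall i j, A i j != 0 -> leV (ggr G j) (ggr F i).

(* the sub-vector space F_x of k^(rank F): span of generators of grade <= x *)
Definition maskF (F : gfree) (x : vec) : 'M[k]_(grk F) :=
  diag_mx (\row_i (if leV (ggr F i) x then 1 else 0)).

(* a free complex  ... -> F_2 -> F_1 -> F_0 ; fd i : F_(i+1) -> F_i *)
Record fres := FRes { fF : nat -> gfree;
                      fd : forall i, 'M[k]_(grk (fF i.+1), grk (fF i)) }.
Arguments fd : clear implicits.

(* F is a minimal free resolution (of finite length) of the module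
   M := coker (fd 0); exactness checked gradewise at every x in R^n. *)
Definition isMinRes (F : fres) : Prop :=
  [/\ forall i, graded (fd F i),
      forall i x, (maskF (fF F i.+2) x *m fd F i.+1
                     == (maskF (fF F i.+1) x :&: kermx (fd F i)))%MS,
      forall i a b, fd F i a b != 0 -> ggr (fF F i.+1) a != ggr (fF F i) b
    & exists len, forall i, (len < i)%N -> grk (fF F i) = 0%N].

(* xi_i(M) identified with the grades of the generators of F_i *)
Definition xi (F : fres) (i : nat) : set vec :=
  [set x | exists l, x = ggr (fF F i) l].

(* coordinate value sets of the Betti grid: Im G^j *)
Definition gridCoord (F : fres) (j : 'I_n.+1) : set R :=
  [set r | exists i x, xi F i x /\ r = x j].

Definition imGrid (F : fres) : set vec :=
  [set x | forall j, gridCoord F j (x j)].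

Definition gridSet (F : fres) : set vec :=
  [set x | exists j, gridCoord F j (x j)].

(* c_M > c  (c_M = min distance between distinct points of Im G_M) *)
Definition cM_gt (F : fres) (c : R) : Prop :=
  exists c', c < c' /\
    forall x y, imGrid F x -> imGrid F y -> x <> y -> c' <= distInf x y.

Definition mergeC (F : fres) (d : R) (x : vec) : vec :=
  fun i => xget (x i) [set g | gridCoord F i g /\ `|x i - g| <= d].

Definition unmerge (F : fres) (d : R) (x : vec) : vec :=
  fun i => mergeC F d x i +
           (if `[< exists g, gridCoord F i g /\ `|x i - g| <= d >] then d else 0).

(* positively sloped lines: iota(t) = lq + t lv, lv > 0, |lv|_inf = 1,
   iota(0) in {x_n = 0} *)
Record line := Line { lq : vec; lv : vec }.
Definition validLine (L : line) : Prop :=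
  [/\ forall i, 0 < lv L i, normInf (lv L) = 1 & lq L ord_max = 0].
Definition iota (L : line) (t : R) : vec := fun i => lq L i + t * lv L i.

(* iota^-1 (push_L p), push_L p = min {q in L | q >= p} *)
Definition pushT (L : line) (p : vec) : R := inf [set t | leV p (iota L t)].

Definition weight (L : line) : R :=
  normInf (fun i => iota L (pushT L (fun j => lq L j + 1)) i - lq L i).

(* the diagonal line L_p = {p + t 1} with its parametrization *)
Definition diagLine (p : vec) : line :=
  Line (fun i => p i - p ord_max) (fun _ => 1).

(* Bar data on a line: bars [bb j, bd j) (bd j = None means +oo), one per
   generator of F_0, plus a chain map (phi0, phi1) from the induced
   presentation of F^L to the canonical resolution of the bars. *)
Record bardata (K0 K1 : nat) := BarData {
  bb : 'I_K0 -> R; bd : 'I_K0 -> option R;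
  phi0 : 'M[k]_(K0, K0); phi1 : 'M[k]_(K1, K0) }.

Definition BD (F : fres) := bardata (grk (fF F 0)) (grk (fF F 1)).

Section Line.
Variables (F : fres) (L : line) (B : BD F).
Definition tgen (i : 'I_(grk (fF F 0))) : R := pushT L (ggr (fF F 0) i).
Definition trel (r : 'I_(grk (fF F 1))) : R := pushT L (ggr (fF F 1) r).
Definition diedBy (j : 'I_(grk (fF F 0))) (t : R) : bool :=
  if bd B j is Some d then d <= t else false.
Definition srcGen t : 'M[k]_(grk (fF F 0)) :=
  diag_mx (\row_i (if tgen i <= t then 1 else 0)).
Definition srcRel t : 'M[k]_(grk (fF F 1), grk (fF F 0)) :=
  diag_mx (\row_r (if trel r <= t then 1 else 0)) *m fd F 0.
Definition tgtGen t : 'M[k]_(grk (fF F 0)) :=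
  diag_mx (\row_j (if bb B j <= t then 1 else 0)).
Definition tgtRel t : 'M[k]_(grk (fF F 0)) :=
  diag_mx (\row_j (if diedBy j t then 1 else 0)).

(* (phi0, phi1) is a chain map lifting an isomorphism
   F^L = coker(fd 0 on L) ~= (+)_j 1^[bb j, bd j). *)
Definition validDecomp : Prop :=
  [/\ forall j d, bd B j = Some d -> bb B j <= d,
      forall i j, phi0 B i j != 0 -> bb B j <= tgen i,
      forall r j, phi1 B r j != 0 -> (exists2 d, bd B j = Some d & d <= trel r),
      fd F 0 *m phi0 B = phi1 B
    & (forall t (v : 'rV[k]_(grk (fF F 0))), (v <= srcGen t)%MS ->
          (v *m phi0 B <= tgtRel t)%MS -> (v <= srcRel t)%MS) /\
      (forall t (w : 'rV[k]_(grk (fF F 0))), (w <= tgtGen t)%MS ->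
          (exists2 v, (v <= srcGen t)%MS & (w - v *m phi0 B <= tgtRel t)%MS))].

Definition generates i j : bool := (tgen i == bb B j) && (phi0 B i j != 0).
Definition kills r j : bool := (bd B j == Some (trel r)) && (phi1 B r j != 0).

Definition validBars : Prop :=
  [/\ validDecomp,
      forall j, exists! i, generates i j,
      forall j, bd B j != None -> exists! r, kills r j
    & forall i, exists j, generates i j].

Definition genShortBar (i : 'I_(grk (fF F 0))) (l : R) : Prop :=
  exists j, generates i j /\ exists2 d, bd B j = Some d & d - bb B j < l.
End Line.

Definition bottleneckLe (K0 K1 K0' K1' : nat) (B : bardata K0 K1)
    (B' : bardata K0' K1') (x : R) : Prop :=
  exists m : 'I_K0 -> 'I_K0' -> bool,
  [/\ forall i j j', m i j -> m i j' -> j = j',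
      forall i i' j, m i j -> m i' j -> i = i',
      forall i j, m i j -> `|bb B i - bb B' j| <= x /\
         match bd B i, bd B' j with
         | None, None => True
         | Some d, Some d' => `|d - d'| <= x
         | _, _ => False end,
      forall i, (forall j, ~~ m i j) ->
         exists2 d, bd B i = Some d & (d - bb B i) / 2 <= x
    & forall j, (forall i, ~~ m i j) ->
         exists2 d, bd B' j = Some d & (d - bb B' j) / 2 <= x].

Definition d0_lt (M N : fres) (BM : line -> BD M) (BN : line -> BD N) (c : R)
  : Prop :=
  exists2 delta, delta < c &
    forall L, validLine L -> bottleneckLe (BM L) (BN L) (delta / weight L).

End PM.
Arguments ggr {R n} g _.
Arguments fd {R k n} f i.

(* Main.v *)
Require Import Defs.
From HB Require Import structures.
From mathcomp Require Import all_boot all_order all_algebra.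
From mathcomp Require Import boolp classical_sets reals.
From mathcomp Require Import ring lra.
Import Order.TTheory GRing.Theory Num.Theory.
Local Open Scope ring_scope.

Section Aux.
Variables (R : realType) (n : nat).

Lemma argmaxE (f : 'I_n.+1 -> R) : exists j0, forall j, f j <= f j0.
Proof.
case: (@arg_maxP _ _ _ ord0 xpredT f isT) => j0 _ H.
by exists j0 => j; apply: H.
Qed.

Lemma normInf_le (x : vec R n) c : 0 <= c -> (forall i, `|x i| <= c) -> normInf x <= c.
Proof.
move=> c0 H; rewrite /normInf; elim/big_ind: _ => //.
  by move=> a b Ha Hb; rewrite ge_max Ha Hb.
Qed.

Lemma normInf_ge (x : vec R n) i : `|x i| <= normInf x.
Proof.
rewrite /normInf; have : i \in index_enum 'I_n.+1 by rewrite mem_index_enum.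
elim: (index_enum _) => // a r IH; rewrite in_cons big_cons.
case/orP => [/eqP <-|/IH h]; first by rewrite le_max lexx.
by rewrite le_max h orbT.
Qed.

Lemma pushT_diag (p q : vec R n) : exists j0, (forall j, q j - p j <= q j0 - p j0) /\
  pushT (diagLine p) q = q j0 - p j0 + p ord_max.
Proof.
have [j0 Hj0] := argmaxE (fun j => q j - p j).
exists j0; split => //.
set T := q j0 - p j0 + p ord_max.
have E : forall t, leV q (Defs.iota (diagLine p) t) <-> T <= t.
  move=> t; rewrite /leV /Defs.iota /=; split.
    move/forallP/(_ j0); rewrite mulr1 /T => h; lra.
  move=> h; apply/forallP => j; rewrite mulr1.
  have := Hj0 j; rewrite /T in h; lra.
rewrite /pushT; apply/le_anti/andP; split.
  apply: (ge_inf (E := [set t | leV q (Defs.iota (diagLine p) t)])).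
    by exists T => t /E.
  by apply/E.
apply: lb_le_inf; first by exists T; apply/E.
by move=> t /E.
Qed.

Lemma normInf1 : normInf (fun _ : 'I_n.+1 => (1 : R)) = 1.
Proof.
apply/le_anti/andP; split.
  by apply: normInf_le => // i; rewrite normr1.
by have := normInf_ge (fun _ : 'I_n.+1 => (1 : R)) ord0; rewrite normr1.
Qed.

Lemma validLine_diag (p : vec R n) : validLine (diagLine p).
Proof. split => /=; [move=> i; exact: ltr01 | exact: normInf1 | by rewrite subrr]. Qed.

Lemma weight_diag (p : vec R n) : weight (diagLine p) = 1.
Proof.
rewrite /weight.
have [j0 [_ ->]] := pushT_diag p (fun j => lq (diagLine p) j + 1).
rewrite /Defs.iota /=.
have -> : p j0 - p ord_max + 1 - p j0 + p ord_max = 1 by ring.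
rewrite -[RHS]normInf1; congr normInf; apply: funext => i /=.
by rewrite !mulr1; ring.
Qed.
End Aux.
Section Surj.
Variables (R : realType) (k : fieldType) (n : nat) (M : fres R k n).

Lemma surj_gen (L : line R n) (B : BD M) : validDecomp L B ->
  forall J, ~~ diedBy B J (bb B J) -> exists g, @tgen R k n M L g = bb B J.
Proof.
case=> _ Hphi _ _ [_ Hsurj] J HJ.
set t := bb B J.
set w : 'rV[k]_(grk (fF M 0)) := delta_mx 0 J.
have Hw : (w <= tgtGen B t)%MS.
  have -> : w = w *m tgtGen B t.
    rewrite /tgtGen mul_mx_diag; apply/matrixP => a b; rewrite !mxE.
    case: (eqVneq b J) => [->|nb]; first by rewrite /t lexx mulr1.
    by rewrite andbF mul0r.
  exact: submxMl.
have [v Hv Hr] := Hsurj t w Hw.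
move/submxP: Hr => [D HD].
have HJ0 : (w - v *m phi0 B) 0 J = 0.
  rewrite HD /tgtRel mul_mx_diag mxE mxE.
  by rewrite (negbTE HJ) mulr0.
have Hne : (v *m phi0 B) 0 J != 0.
  move: HJ0; rewrite !mxE !eqxx /= => /eqP; rewrite subr_eq0 => /eqP <-.
  exact: oner_neq0.
have [i Hi] : exists i, v 0 i * phi0 B i J != 0.
  apply/existsP; move: Hne; apply: contraR; rewrite negb_exists => /forallP H.
  rewrite mxE; apply/eqP/big1 => i _; exact/eqP/negPn/H.
move: Hi; rewrite mulf_eq0 negb_or => /andP [vi pi].
exists i; apply/le_anti/andP; split; last exact: Hphi.
move/submxP: Hv => [D' HD'].
move: vi; rewrite HD' /srcGen mul_mx_diag mxE mxE.
by case: ifP => // _; rewrite mulr0 eqxx.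
Qed.
End Surj.

Section Key.
Variables (R : realType) (k : fieldType) (n : nat) (M N : fres R k n)
  (BM : line R n -> BD M) (BN : line R n -> BD N).

Lemma line_short (c : R) (p : vec R n) (i : 'I_(grk (fF N 0))) :
  (forall L, validLine L -> validDecomp L (BM L)) ->
  (forall L, validLine L -> validBars L (BN L)) ->
  d0_lt BM BN c ->
  genShortBar (diagLine p) (BN (diagLine p)) i (2 * c) \/
  exists g, `|pushT (diagLine p) (ggr (fF M 0) g) - pushT (diagLine p) (ggr (fF N 0) i)| < c.
Proof.
move=> HM HN [delta Hdc Hb].
set L := diagLine p.
have VL : validLine L := @validLine_diag R n p.
have := Hb L VL; rewrite /L weight_diag divr1 => -[m [_ _ h3 _ h5]].
have [Hdec _ _ Hgen] := HN L VL.
have [j /andP [/eqP Htg Hphi]] := Hgen i.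
have Hx : delta < c := Hdc.
case: (boolP [exists i', m i' j]) => [/existsP [i' mij]|].
  have [Hbb Hbd] := h3 _ _ mij.
  have Halive : ~~ diedBy (BM L) i' (bb (BM L) i') ->
      exists g, `|pushT L (ggr (fF M 0) g) - pushT L (ggr (fF N 0) i)| < c.
    move=> Hal; have [g Hg] := @surj_gen R k n M L (BM L) (HM L VL) i' Hal.
    exists g; rewrite /tgen in Hg, Htg; rewrite Hg Htg.
    exact: le_lt_trans Hbb Hx.
  move: Hbd; rewrite /diedBy in Halive.
  case E1: (bd (BM L) i') Halive => [d|]; case E2: (bd (BN L) j) => [d'|] // Halive.
    case: (ltP (d' - bb (BN L) j) (2 * c)) => [lt|ge].
      by left; exists j; split; [rewrite /generates Htg eqxx Hphi | exists d'].
    move=> Hdd; right; apply: Halive; rewrite -ltNge.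
    move: Hbb Hdd; rewrite !ler_norml => /andP [a1 a2] /andP [b1 b2]; lra.
  by move=> _; right; apply: Halive.
rewrite negb_exists => /forallP Hn.
have [d Hd Hl] := h5 j Hn.
left; exists j; split; first by rewrite /generates Htg eqxx Hphi.
exists d => //; lra.
Qed.
End Key.

Section Grid.
Variables (R : realType) (k : fieldType) (n : nat) (M : fres R k n) (c : R).
Hypothesis c0 : 0 <= c.
Hypothesis hc : cM_gt M (2 * c).

Lemma grid_sep j g1 g2 : gridCoord M j g1 -> gridCoord M j g2 -> g1 != g2 ->
  2 * c < `|g1 - g2|.
Proof.
move=> [i1 [x1 [X1 ->]]] [i2 [x2 [X2 ->]]] ne.
have [c' [lt Hc']] := hc.
set y1 : vec R n := fun l => if l == j then x1 j else x1 l.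
set y2 : vec R n := fun l => if l == j then x2 j else x1 l.
have IG1 : imGrid M y1.
  move=> l; rewrite /y1; case: eqP => [->|_]; by exists i1, x1.
have IG2 : imGrid M y2.
  move=> l; rewrite /y2; case: eqP => [->|_]; [by exists i2, x2 | by exists i1, x1].
have N12 : y1 <> y2.
  by move/(congr1 (fun f => f j)); rewrite /y1 /y2 eqxx; apply/eqP.
have := Hc' _ _ IG1 IG2 N12.
have : distInf y1 y2 <= `|x1 j - x2 j|.
  apply: normInf_le => // l; rewrite /y1 /y2; case: eqP => _ //.
  by rewrite subrr normr0.
move=> h1 h2; exact: lt_le_trans lt (le_trans h2 h1).
Qed.

Definition Near (b : vec R n) j := exists G, gridCoord M j G /\ `|b j - G| <= c.

Lemma merge_near b j : Near b j ->
  gridCoord M j (mergeC M c b j) /\ `|b j - mergeC M c b j| <= c /\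
  unmerge M c (mergeC M c b) j = mergeC M c b j + c.
Proof.
move=> [G HG].
have := @xgetI _ (b j) [set g | gridCoord M j g /\ `|b j - g| <= c] G HG.
rewrite -/(mergeC M c b j) => -[P1 P2]; split => //; split => //.
set y := mergeC M c b.
have Hy : mergeC M c y j = y j.
  rewrite {1}/mergeC; apply: xget_unique; first by split => //; rewrite subrr normr0.
  move=> g [Pg1 Pg2]; apply/eqP; apply/negPn/negP => ne.
  have := @grid_sep _ _ _ Pg1 P1 ne; rewrite distrC in Pg2; move: Pg2.
  move=> h1 h2; have := lt_le_trans h2 h1.
  by rewrite mulr_natl mulr2n ltNge lerDl c0.
rewrite /unmerge Hy asboolT //; exists (y j); split => //.
by rewrite subrr normr0.
Qed.

Lemma merge_far b j : ~ Near b j ->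
  mergeC M c b j = b j /\ unmerge M c (mergeC M c b) j = b j.
Proof.
move=> nN.
have E : mergeC M c b j = b j.
  rewrite /mergeC; apply: xgetPN => g Pg; apply: nN; exists g; exact: Pg.
split => //; rewrite /unmerge.
have -> : mergeC M c (mergeC M c b) j = b j.
  rewrite {1}/mergeC E; apply: xgetPN => g Pg; apply: nN; exists g; exact: Pg.
rewrite asboolF ?addr0 //; move=> [g Pg]; apply: nN; exists g; rewrite E in Pg.
exact: Pg.
Qed.
End Grid.
Arguments Near {R k n} M c b j.
Arguments merge_near {R k n M c} c0 hc {b j}.
Arguments merge_far {R k n M c b j}.
Arguments grid_sep {R k n M c} hc {j g1 g2}.

Theorem mainTheorem18 (R : realType) (k : fieldType) (n : nat)
  (M N : fres R k n)
  (BM : line R n -> BD M) (BN : line R n -> BD N)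
  (kappa eps : R) :
  0 <= kappa -> 0 <= eps ->
  isMinRes M -> isMinRes N ->
  (forall L, validLine L -> validDecomp L (BM L)) ->
  (forall L, validLine L -> validBars L (BN L)) ->
  d0_lt BM BN (kappa * eps) ->
  cM_gt M (2 * (kappa * eps)) ->
  forall i : 'I_(grk (fF N 0)),
    let b := ggr (fF N 0) i in
    (exists2 y, imGrid M y & distInf b y <= 2 * (kappa * eps))
    \/ ((exists2 y, gridSet M y & distInf b y <= kappa * eps) /\
        let L' := diagLine (unmerge M (kappa * eps) (mergeC M (kappa * eps) b)) in
        genShortBar L' (BN L') i (2 * (kappa * eps)))
    \/ genShortBar (diagLine b) (BN (diagLine b)) i (2 * (kappa * eps)).
Proof.
move=> hk he _ _ hBM hBN hd hc i b.
set c := kappa * eps.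
have c0 : 0 <= c by apply: mulr_ge0.
have c2 : c <= 2 * c by rewrite mulr_natl mulr2n lerDl.
set y := mergeC M c b.
set b' := unmerge M c y.
have Hd : forall j, `|b j - y j| <= c.
  move=> j; case: (pselect (Near M c b j)) => [hn|hf].
    by have [_ [P2 _]] := merge_near c0 hc hn.
  by have [E _] := merge_far hf; rewrite /y E subrr normr0.
have Hdist : distInf b y <= c by apply: normInf_le.
case: (pselect (forall j, Near M c b j)) => [Hall|Hnall].
  left; exists y; last exact: le_trans Hdist c2.
  by move=> j; have [P1 _] := merge_near c0 hc (Hall j).
have [j0 Hj0] : exists j0, ~ Near M c b j0 by apply/existsNP.
have Hle : forall j, b j - b' j <= 0.
  move=> j; case: (pselect (Near M c b j)) => [hn|hf].
    have [_ [P2 P3]] := merge_near c0 hc hn.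
    rewrite /b' /y P3; move: P2; rewrite ler_norml => /andP [_ h]; lra.
  by have [_ E] := merge_far hf; rewrite /b' /y E subrr.
have key : ~ exists g, `|pushT (diagLine b') (ggr (fF M 0) g) -
                        pushT (diagLine b') b| < c.
  move=> [g Hg].
  have [j1 [Hj1 E1]] := @pushT_diag R n b' b.
  have Hb0 : pushT (diagLine b') b = b' ord_max.
    rewrite E1; suff -> : b j1 - b' j1 = 0 by rewrite add0r.
    apply/le_anti; rewrite Hle /=; apply: le_trans (Hj1 j0).
    by have [_ E] := merge_far Hj0; rewrite /b' /y E subrr.
  have [j2 [_ E2]] := @pushT_diag R n b' (ggr (fF M 0) g).
  rewrite E2 Hb0 addrK in Hg.
  have grid : gridCoord M j2 (ggr (fF M 0) g j2).
    by exists 0%N, (ggr (fF M 0) g); split => //; exists g.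
  case: (pselect (Near M c b j2)) => [hn|hf].
    have [P1 [_ P3]] := merge_near c0 hc hn.
    rewrite /b' /y P3 in Hg.
    case: (eqVneq (ggr (fF M 0) g j2) (mergeC M c b j2)) => [eq|ne].
      move: Hg; rewrite eq.
      by rewrite opprD addrA subrr add0r normrN ger0_norm // ltxx.
    have := grid_sep hc grid P1 ne.
    move: Hg; rewrite ltr_norml => /andP [h1 h2].
    rewrite -/c ltr_normr => /orP [h|h]; lra.
  have [_ P3] := merge_far hf.
  rewrite /b' /y P3 in Hg.
  apply: hf; exists (ggr (fF M 0) g j2); split => //.
  by rewrite distrC ltW.
case: (@line_short R k n M N BM BN c b' i hBM hBN hd) => [short|ex]; last by exfalso.
case: (pselect (exists j, Near M c b j)) => [[j Hj]|Hnone].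
  right; left; split => //.
  exists y => //; exists j.
  by have [P1 _] := merge_near c0 hc Hj.
right; right.
have Eb : b' = b.
  apply: funext => j; have hf : ~ Near M c b j by move=> h; apply: Hnone; exists j.
  by have [_ P3] := merge_far hf.
by rewrite -Eb.
Qed.
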